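(* Let $H$ be a complex Hilbert space and $\mathcal S(H)$ the set of bounded self-adjoint operators on $H$ with the logical order $\preceq$. If $A,B,C \in \mathcal S(H)$ and $A \preceq C$, $B \preceq C$, then the meet $A \curlywedge B$ and the join $A \curlyvee B$ of $A$ and $B$ in $(\mathcal S(H),\preceq)$ exist, and \[ A \curlywedge B = C(P_A \wedge P_B), \qquad A \curlyvee B = C(P_A \vee P_B). \]
   Context: For $A \in \mathcal S(H)$, $P_A$ denotes the orthogonal projection onto the closure of the range of $A$; $\wedge$ and $\vee$ denote meet and join in the lattice of orthogonal projections (ordered by $P_1 \le P_2$ iff $P_1P_2 = P_1$). The logical order: $A \preceq B$ iff $B = A + D$ for some $D \in \mathcal S(H)$ with $AD = O$; equivalently $A = BP_A$. Juxtaposition denotes operator composition. *)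

(* Defs.v *)
From Stdlib Require Import ClassicalEpsilon.
From mathcomp Require Import all_boot all_algebra complex.
From mathcomp Require Import boolp classical_sets reals topology normedtype.
Import GRing.Theory Num.Theory.
Set Implicit Arguments. Unset Strict Implicit. Unset Printing Implicit Defensive.
Local Open Scope ring_scope.
Local Open Scope classical_set_scope.

Definition hilbert_inner (R : realType) (H : completeNormedModType R[i])
    (ip : H -> H -> R[i]) : Prop :=
  [/\ (forall (a : R[i]) (x y z : H), ip (a *: x + y) z = a * ip x z + ip y z),
      (forall x y : H, ip y x = (ip x y)^*) &
      (forall x : H, ip x x = `|x| ^+ 2)].

(* Bounded (= continuous) linear operators on H; composition is \o. *)
Definition bounded_op (R : realType) (H : completeNormedModType R[i])
    (A : H -> H) : Prop :=
  (forall (a : R[i]) (x y : H), A (a *: x + y) = a *: A x + A y) /\ continuous A.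

Definition selfadj (R : realType) (H : completeNormedModType R[i])
    (ip : H -> H -> R[i]) (A : H -> H) : Prop :=
  bounded_op A /\ (forall x y : H, ip (A x) y = ip x (A y)).

Definition zero_op (R : realType) (H : completeNormedModType R[i]) : H -> H :=
  fun _ => 0.

Definition add_op (R : realType) (H : completeNormedModType R[i])
    (A B : H -> H) : H -> H := fun x => A x + B x.

Definition logical_le (R : realType) (H : completeNormedModType R[i])
    (ip : H -> H -> R[i]) (A B : H -> H) : Prop :=
  exists D : H -> H, [/\ selfadj ip D, A \o D = @zero_op R H & B = add_op A D].

Definition orth_proj (R : realType) (H : completeNormedModType R[i])
    (ip : H -> H -> R[i]) (P : H -> H) : Prop :=
  selfadj ip P /\ P \o P = P.

Definition proj_le (R : realType) (H : completeNormedModType R[i])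
    (P Q : H -> H) : Prop := P \o Q = P.

Definition range_proj (R : realType) (H : completeNormedModType R[i])
    (ip : H -> H -> R[i]) (A : H -> H) : H -> H :=
  epsilon (inhabits (fun x : H => x))
    (fun P => orth_proj ip P /\ range P = closure (range A)).

Definition proj_meet (R : realType) (H : completeNormedModType R[i])
    (ip : H -> H -> R[i]) (P Q : H -> H) : H -> H :=
  epsilon (inhabits (fun x : H => x))
    (fun M => [/\ orth_proj ip M, proj_le M P, proj_le M Q &
       forall N, orth_proj ip N -> proj_le N P -> proj_le N Q -> proj_le N M]).

Definition proj_join (R : realType) (H : completeNormedModType R[i])
    (ip : H -> H -> R[i]) (P Q : H -> H) : H -> H :=
  epsilon (inhabits (fun x : H => x))
    (fun J => [/\ orth_proj ip J, proj_le P J, proj_le Q J &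
       forall N, orth_proj ip N -> proj_le P N -> proj_le Q N -> proj_le J N]).

Definition is_meet_S (R : realType) (H : completeNormedModType R[i])
    (ip : H -> H -> R[i]) (A B X : H -> H) : Prop :=
  [/\ selfadj ip X, logical_le ip X A, logical_le ip X B &
      forall Y, selfadj ip Y -> logical_le ip Y A -> logical_le ip Y B ->
        logical_le ip Y X].

Definition is_join_S (R : realType) (H : completeNormedModType R[i])
    (ip : H -> H -> R[i]) (A B X : H -> H) : Prop :=
  [/\ selfadj ip X, logical_le ip A X, logical_le ip B X &
      forall Y, selfadj ip Y -> logical_le ip A Y -> logical_le ip B Y ->
        logical_le ip X Y].

(* Main.v *)
Require Import Defs.
From mathcomp Require Import all_boot all_algebra complex.
From mathcomp Require Import boolp classical_sets reals topology normedtype.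
From Stdlib Require Import ClassicalEpsilon.
From mathcomp Require Import order ring lra.
Import Order.TTheory GRing.Theory Num.Theory.
Local Open Scope ring_scope.

Section Hilb.
Variables (R : realType) (H : completeNormedModType R[i]) (ip : H -> H -> R[i]).
Hypothesis hH : hilbert_inner ip.

Local Notation RE := (@complex.Re R).
Local Notation IM := (@complex.Im R).
Local Notation "r %:C" := (real_complex R r) : ring_scope.

Lemma cjD (x y : R[i]) : (x + y)^* = x^* + y^*. Proof. exact: rmorphD. Qed.
Lemma cjM (x y : R[i]) : (x * y)^* = x^* * y^*. Proof. exact: rmorphM. Qed.
Lemma cjN (x : R[i]) : (- x)^* = - x^*. Proof. exact: rmorphN. Qed.
Lemma cj0 : (0 : R[i])^* = 0. Proof. exact: rmorph0. Qed.
Lemma cjK (x : R[i]) : x^*^* = x. Proof. exact: conjCK. Qed.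

Lemma ipDZl a x y z : ip (a *: x + y) z = a * ip x z + ip y z.
Proof. by case: hH. Qed.
Lemma ipC x y : ip y x = (ip x y)^*.
Proof. by case: hH. Qed.
Lemma ipxx x : ip x x = `|x| ^+ 2.
Proof. by case: hH. Qed.

Lemma ip0l z : ip 0 z = 0.
Proof.
have := ipDZl 1 0 0 z; rewrite scale1r addr0 mul1r.
by move=> /(congr1 (fun t => t - ip 0 z)); rewrite subrr addrK => /esym.
Qed.
Lemma ipDl x y z : ip (x + y) z = ip x z + ip y z.
Proof. by have := ipDZl 1 x y z; rewrite scale1r mul1r. Qed.
Lemma ipZl a x z : ip (a *: x) z = a * ip x z.
Proof. by have := ipDZl a x 0 z; rewrite !addr0 ip0l addr0. Qed.
Lemma ipNl x z : ip (- x) z = - ip x z.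
Proof. by rewrite -scaleN1r ipZl mulN1r. Qed.
Lemma ipBl x y z : ip (x - y) z = ip x z - ip y z.
Proof. by rewrite ipDl ipNl. Qed.
Lemma ipDr x y z : ip x (y + z) = ip x y + ip x z.
Proof. by rewrite ipC ipDl cjD -!ipC. Qed.
Lemma ipZr a x y : ip x (a *: y) = a^* * ip x y.
Proof. by rewrite ipC ipZl cjM -ipC. Qed.
Lemma ip0r z : ip z 0 = 0.
Proof. by rewrite ipC ip0l cj0. Qed.
Lemma ipNr x z : ip z (- x) = - ip z x.
Proof. by rewrite ipC ipNl cjN -ipC. Qed.
Lemma ipBr x y z : ip z (x - y) = ip z x - ip z y.
Proof. by rewrite ipDr ipNr. Qed.

Lemma ipxx_eq0 x : ip x x = 0 -> x = 0.
Proof. by rewrite ipxx => /eqP; rewrite expf_eq0 /= normr_eq0 => /eqP. Qed.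

Lemma ip_extl x x' : (forall y, ip x y = ip x' y) -> x = x'.
Proof.
move=> h; apply/eqP; rewrite -subr_eq0; apply/eqP/ipxx_eq0.
by rewrite ipBl h subrr.
Qed.
Lemma ip_extr x x' : (forall y, ip y x = ip y x') -> x = x'.
Proof.
by move=> h; apply: ip_extl => y; rewrite ipC h -ipC.
Qed.

Lemma RE_D (x y : R[i]) : RE (x + y) = RE x + RE y.
Proof. by case: x; case: y. Qed.
Lemma RE_N (x : R[i]) : RE (- x) = - RE x.
Proof. by case: x. Qed.
Lemma RE_B (x y : R[i]) : RE (x - y) = RE x - RE y.
Proof. by rewrite RE_D RE_N. Qed.
Lemma RE_M (x y : R[i]) : RE (x * y) = RE x * RE y - IM x * IM y.
Proof. by case: x; case: y. Qed.
Lemma IM_M (x y : R[i]) : IM (x * y) = RE x * IM y + IM x * RE y.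
Proof. by case: x => a b; case: y => c d /=; ring. Qed.
Lemma RE_conj (x : R[i]) : RE (x^*) = RE x.
Proof. by case: x. Qed.
Lemma IM_conj (x : R[i]) : IM (x^*) = - IM x.
Proof. by case: x. Qed.
Lemma RE_C (r : R) : RE (r%:C) = r. Proof. by []. Qed.
Lemma IM_C (r : R) : IM (r%:C) = 0. Proof. by []. Qed.
Lemma ge0_C (x : R[i]) : 0 <= x -> x = (RE x)%:C.
Proof. case: x => a b; rewrite lecE /= => /andP[/eqP -> _]. by []. Qed.
Lemma eqC (x y : R[i]) : RE x = RE y -> IM x = IM y -> x = y.
Proof. by case: x; case: y => /= a b c d -> ->. Qed.

Definition nv (x : H) : R := RE `|x|.
Lemma nvE x : `|x| = (nv x)%:C.
Proof. exact/ge0_C. Qed.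
Lemma nv_ge0 x : 0 <= nv x.
Proof. by have := normr_ge0 x; rewrite nvE lecR. Qed.
Lemma nvD x y : nv (x + y) <= nv x + nv y.
Proof. by have := ler_normD x y; rewrite !nvE -rmorphD lecR. Qed.
Lemma nvN x : nv (- x) = nv x.
Proof. by rewrite /nv normrN. Qed.
Lemma nv_lt x (e : R[i]) : 0 < e -> nv x < RE e -> `|x| < e.
Proof.
move=> e0; rewrite (ge0_C e (ltW e0)) nvE ltcR. by [].
Qed.
Lemma ipxxE x : ip x x = (nv x ^+ 2)%:C.
Proof. by rewrite ipxx nvE rmorphXn. Qed.
Lemma nv_eq0 x : nv x = 0 -> x = 0.
Proof. by move=> h; apply: ipxx_eq0; rewrite ipxxE h expr0n. Qed.


Definition lin (A : H -> H) := forall a x y, A (a *: x + y) = a *: A x + A y.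
Definition sym (A : H -> H) := forall x y, ip (A x) y = ip x (A y).

Section LinOps.
Variable A : H -> H.
Hypothesis hA : lin A.
Lemma op0 : A 0 = 0.
Proof.
have := hA 1 0 0; rewrite scale1r addr0 scale1r.
by move=> /(congr1 (fun t => t - A 0)); rewrite subrr addrK => /esym.
Qed.
Lemma opD x y : A (x + y) = A x + A y.
Proof. by have := hA 1 x y; rewrite !scale1r. Qed.
Lemma opZ a x : A (a *: x) = a *: A x.
Proof. by have := hA a x 0; rewrite !addr0 op0 addr0. Qed.
Lemma opN x : A (- x) = - A x.
Proof. by rewrite -scaleN1r opZ scaleN1r. Qed.
Lemma opB x y : A (x - y) = A x - A y.
Proof. by rewrite opD opN. Qed.
End LinOps.

Lemma sa_lin (A : H -> H) : selfadj ip A -> lin A.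
Proof. by case=> [[]]. Qed.
Lemma sa_sym (A : H -> H) : selfadj ip A -> sym A.
Proof. by case. Qed.
Lemma sa_cont (A : H -> H) : selfadj ip A -> continuous A.
Proof. by case=> [[]]. Qed.

Lemma lin_comp (A B : H -> H) : lin A -> lin B -> lin (A \o B).
Proof. by move=> hA hB a x y /=; rewrite hB hA. Qed.
Lemma lin_sub (A B : H -> H) : lin A -> lin B -> lin (fun x => A x - B x).
Proof.
move=> hA hB a x y; rewrite hA hB scalerBr.
by rewrite addrACA opprD.
Qed.
Lemma cont_comp (A B : H -> H) : continuous A -> continuous B -> continuous (A \o B).
Proof. by move=> cA cB x; apply: continuous_comp; [exact: cB | exact: cA]. Qed.
Lemma cont_sub (A B : H -> H) : continuous A -> continuous B -> continuous (fun x => A x - B x).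
Proof. by move=> cA cB x; apply: continuousB; [exact: cA | exact: cB]. Qed.
Lemma sym_sub (A B : H -> H) : sym A -> sym B -> sym (fun x => A x - B x).
Proof. by move=> sA sB x y; rewrite ipBl ipBr sA sB. Qed.
Lemma sym_comm (A B : H -> H) : sym A -> sym B -> A \o B = B \o A -> sym (A \o B).
Proof.
move=> sA sB e x y /=; rewrite sA sB.
by have := congr1 (fun f => f y) e => /= ->.
Qed.

Lemma sa_sub (A B : H -> H) : selfadj ip A -> selfadj ip B -> selfadj ip (fun x => A x - B x).
Proof.
move=> hA hB; split; [split|].
- exact: lin_sub (sa_lin _ hA) (sa_lin _ hB).
- exact: cont_sub (sa_cont _ hA) (sa_cont _ hB).
- exact: sym_sub (sa_sym _ hA) (sa_sym _ hB).
Qed.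
Lemma sa_comp (A B : H -> H) : selfadj ip A -> selfadj ip B -> A \o B = B \o A ->
  selfadj ip (A \o B).
Proof.
move=> hA hB e; split; [split|].
- exact: lin_comp (sa_lin _ hA) (sa_lin _ hB).
- exact: cont_comp (sa_cont _ hA) (sa_cont _ hB).
- exact: sym_comm (sa_sym _ hA) (sa_sym _ hB) e.
Qed.
Lemma sa_id : selfadj ip id.
Proof. split; [split|] => // x; exact: cvg_id. Qed.

(* swapping: adjoint of a composition *)
Lemma swap (S T U : H -> H) : sym S -> sym T -> sym U -> S \o T = U -> T \o S = U.
Proof.
move=> sS sT sU e; apply/funext => x /=; apply: ip_extl => y.
rewrite sT sS sU; by have := congr1 (fun f => f y) e => /= ->.
Qed.
Lemma swap0 (S T : H -> H) : sym S -> sym T -> S \o T = @zero_op R H -> T \o S = @zero_op R H.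
Proof.
move=> sS sT; apply: swap => // x y; by rewrite /zero_op ip0l ip0r.
Qed.

Lemma fapp (f g : H -> H) x : f = g -> f x = g x.
Proof. by move=> ->. Qed.

Lemma closed_ker (E : H -> H) : continuous E -> closed [set x | E x = 0].
Proof.
move=> cE.
have hc : closed [set (0:H)]%classic.
  apply: accessible_closed_set1; apply: hausdorff_accessible; exact: norm_hausdorff.
exact: ((continuous_closedP E).1 cE _ hc).
Qed.

Lemma closure_min (A B : set H) : closed B -> (A `<=` B)%classic -> (closure A `<=` B)%classic.
Proof. by move=> cB AB x /(closureS AB); rewrite -((closure_id B).1 cB). Qed.


Lemma nv_re v : nv v ^+ 2 = RE (ip v v).
Proof. by rewrite ipxxE. Qed.
Lemma nv0 : nv 0 = 0.
Proof. by rewrite /nv normr0. Qed.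
Lemma para u v : nv (u + v) ^+ 2 + nv (u - v) ^+ 2 = 2 * nv u ^+ 2 + 2 * nv v ^+ 2.
Proof.
rewrite !nv_re.
have e : ip (u + v) (u + v) + ip (u - v) (u - v) =
         ip u u + ip u u + (ip v v + ip v v).
  by rewrite ?ipDl ?ipDr ?ipNl ?ipNr; ring.
by rewrite -RE_D e !RE_D; ring.
Qed.
Lemma nv_dbl z : nv (z + z) ^+ 2 = 4 * nv z ^+ 2.
Proof. by have := para z z; rewrite subrr nv0 expr0n /= addr0 => ->; ring. Qed.

Definition cC (t : R) : R[i] := (t%:C)%C.
Lemma cjC t : (cC t)^* = cC t.
Proof. by apply: eqC; rewrite ?RE_conj ?IM_conj //= oppr0. Qed.

Lemma nv_sub_sc z y t :
  nv (z - cC t *: y) ^+ 2 = nv z ^+ 2 - 2 * t * RE (ip z y) + t ^+ 2 * nv y ^+ 2.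
Proof.
rewrite !nv_re ipBl !ipBr !ipZl !ipZr cjC.
rewrite (ipC y z) !RE_B !(RE_M (cC t)) /= (RE_conj (ip y z)); ring.
Qed.

Lemma orth_re z y : (forall t : R, nv z <= nv (z - cC t *: y)) -> RE (ip z y) = 0.
Proof.
move=> h; set a := RE (ip z y); set b := nv y ^+ 2.
have b0 : 0 <= b by rewrite /b exprn_ge0 // nv_ge0.
have := h (a / (b + 1)).
have z0 := nv_ge0 z; have w0 := nv_ge0 (z - cC (a / (b + 1)) *: y).
move=> hle.
have : nv z ^+ 2 <= nv (z - cC (a / (b + 1)) *: y) ^+ 2.
  by rewrite ler_sqr ?nnegrE.
rewrite nv_sub_sc -/a -/b => hq.
have hb1 : 0 < b + 1 by lra.
have : a ^+ 2 * (b + 2) <= 0.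
  have e : 2 * (a / (b + 1)) * a - (a / (b + 1)) ^+ 2 * b
           = a ^+ 2 * (b + 2) / (b + 1) ^+ 2.
    field; lra.
  have : 0 <= - (a ^+ 2 * (b + 2) / (b + 1) ^+ 2) by rewrite -e; lra.
  rewrite oppr_ge0 pmulr_lle0 // invr_gt0 exprn_gt0 //.
nra.
Qed.


Lemma cC_gt0 t : 0 < t -> 0 < cC t.
Proof. by move=> t0; rewrite ltcE /= eqxx. Qed.
Definition iC : R[i] := (Complex 0 1).

Lemma small_inv (d : R) : 0 < d -> exists N : nat, forall n, (N <= n)%N -> (n.+1%:R)^-1 < d.
Proof.
move=> d0; exists (Num.bound d^-1) => n hn.
rewrite invf_plt ?posrE ?ltr0Sn //.
apply: lt_le_trans (Num.Theory.archi_boundP _) _; first by rewrite invr_ge0 ltW.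
rewrite ler_nat; exact: leq_trans hn (leqnSn n).
Qed.

Lemma inv_le1 n : (n.+1%:R : R)^-1 <= 1.
Proof. by rewrite invf_le1 ?ltr0Sn // ler1n. Qed.
Lemma inv_ge0 n : 0 <= (n.+1%:R : R)^-1.
Proof. by rewrite invr_ge0 ltW ?ltr0Sn. Qed.

Definition subsp (M : set H) :=
  M 0 /\ (forall a x y, M x -> M y -> M (a *: x + y)).

Lemma subspD M : subsp M -> forall x y, M x -> M y -> M (x + y).
Proof. by case=> _ h x y Mx My; have := h 1 x y Mx My; rewrite scale1r. Qed.
Lemma subspZ M : subsp M -> forall a x, M x -> M (a *: x).
Proof. by case=> M0 h a x Mx; have := h a x 0 Mx M0; rewrite addr0. Qed.
Lemma subspB M : subsp M -> forall x y, M x -> M y -> M (x - y).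
Proof.
move=> hM x y Mx My; rewrite -scaleN1r addrC.
by case: hM => _ h; apply: h.
Qed.

Lemma decomp (M : set H) : subsp M -> closed M ->
  forall x, exists2 m, M m & forall y, M y -> ip (x - m) y = 0.
Proof.
move=> hM cM x; have M0 := hM.1.
pose S := [set r : R | exists2 m, M m & r = nv (x - m)]%classic.
have hS : has_inf S.
  split; first by exists (nv (x - 0)); exists 0.
  by exists 0 => r [m _ ->]; exact: nv_ge0.
set D := inf S.
have DS : forall m, M m -> D <= nv (x - m).
  by move=> m Mm; apply: (ge_inf hS.2); exists m.
have D0 : 0 <= D.
  apply: lb_le_inf; first exact: hS.1.
  by move=> r [m _ ->]; exact: nv_ge0.
have seq : forall n : nat, exists m, M m /\ nv (x - m) < D + (n.+1%:R)^-1.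
  move=> n; have hp : 0 < (n.+1%:R : R)^-1 by rewrite invr_gt0 ltr0Sn.
  have [r [m Mm ->] hr] := inf_adherent hp hS.
  by exists m.
have [u hu] := boolp.choice seq.
have est : forall m1 m2 a b, M m1 -> M m2 -> 0 <= a <= 1 -> 0 <= b <= 1 ->
    nv (x - m1) <= D + a -> nv (x - m2) <= D + b ->
    nv (m1 - m2) ^+ 2 <= 2 * (a + b) * (2 * D + 1).
  move=> m1 m2 a b M1 M2 /andP[a0 a1] /andP[b0 b1] h1 h2.
  pose w := ((1 / 2 : R[i]) *: (m1 + m2)).
  have Mw : M w by apply: subspZ => //; apply: subspD.
  have ww : w + w = m1 + m2 by rewrite -scalerDl -splitr scale1r.
  have hw : (x - w) + (x - w) = (x - m1) + (x - m2).
    rewrite addrACA [in RHS]addrACA -!opprD ww. reflexivity.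
  have := para (x - m1) (x - m2).
  rewrite -hw nv_dbl.
  have -> : x - m1 - (x - m2) = - (m1 - m2).
    by rewrite !opprB [m2 - x]addrC addrACA subrr add0r addrC.
  rewrite nvN => hp.
  have hDw := DS w Mw.
  have n1 := nv_ge0 (x - m1); have n2 := nv_ge0 (x - m2).
  have q1 : nv (x - m1) ^+ 2 <= (D + a) ^+ 2 by rewrite ler_sqr ?nnegrE //; lra.
  have q2 : nv (x - m2) ^+ 2 <= (D + b) ^+ 2 by rewrite ler_sqr ?nnegrE //; lra.
  have q3 : D ^+ 2 <= nv (x - w) ^+ 2 by rewrite ler_sqr ?nnegrE // nv_ge0.
  have q4 : a ^+ 2 <= a by nra.
  have q5 : b ^+ 2 <= b by nra.
  nra.
have cu : cauchy (u @ \oo)%classic.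
  apply: cauchy_exP => eps eps0.
  set e := RE eps.
  have e0 : 0 < e by move: eps0; rewrite ltcE => /andP[].
  have hd : 0 < e ^+ 2 / (4 * (2 * D + 1)) by apply: divr_gt0; [exact: exprn_gt0 | lra].
  have [N hN] := small_inv _ hd.
  exists (u N); exists N => // n /= hn.
  rewrite -ball_normE /ball_ /=; apply: nv_lt => //; rewrite -/e.
  have hNN := hN N (leqnn N); have hnn := hN n hn.
  have := est (u N) (u n) _ _ (hu N).1 (hu n).1.
  have iN0 := inv_ge0 N; have in0 := inv_ge0 n.
  have iN1 := inv_le1 N; have in1 := inv_le1 n.
  move=> /(_ (N.+1%:R^-1) (n.+1%:R^-1)).
  rewrite iN0 iN1 in0 in1 => /(_ isT isT (ltW (hu N).2) (ltW (hu n).2)) hq.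
  have : nv (u N - u n) ^+ 2 < e ^+ 2.
    apply: le_lt_trans hq _.
    have he : e ^+ 2 = e ^+ 2 / (4 * (2 * D + 1)) * (4 * (2 * D + 1)).
      by field; lra.
    rewrite [X in _ < X]he.
    set d := e ^+ 2 / (4 * (2 * D + 1)) in hNN hnn *.
    have hK : 0 < 2 * D + 1 by lra.
    set a := (N.+1%:R^-1 : R) in hNN iN0 iN1 *; set b := (n.+1%:R^-1 : R) in hnn in0 in1 *.
    have h2 : 2 * (a + b) < 4 * d by lra.
    nra.
  by rewrite ltr_sqr ?nnegrE ?nv_ge0 // ltW.
have cv : (u @ \oo --> lim (u @ \oo))%classic by apply/cauchy_cvgP.
set m := lim (u @ \oo)%classic in cv.
have ev : (\forall n \near \oo, M (u n))%classic by exists 0%N => // n _; exact: (hu n).1.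
have Mm : M m by apply: (closed_cvg M cM ev m cv).
have hmD : nv (x - m) <= D.
  rewrite leNgt; apply/negP => hlt.
  set eps := (nv (x - m) - D) / 3.
  have eps0 : 0 < eps by rewrite /eps; lra.
  have [N1 _ h1] := cvgr_dist_lt u m cv (cC eps) (cC_gt0 _ eps0).
  have [N2 hN2] := small_inv _ eps0.
  have h1' := h1 (maxn N1 N2) (leq_maxl N1 N2).
  move: h1'; rewrite /= nvE ltcR => h1'.
  have h2 := hN2 (maxn N1 N2) (leq_maxr N1 N2).
  have h3 := (hu (maxn N1 N2)).2.
  set k := maxn N1 N2 in h1' h2 h3.
  have h4 : nv (x - m) <= nv (x - u k) + nv (m - u k).
    have -> : x - m = (x - u k) + - (m - u k) by rewrite opprB addrA subrK.
    by rewrite -(nvN (m - u k)); apply: nvD.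
  set a := (k.+1%:R^-1 : R) in h2 h3.
  have epsE : eps = (nv (x - m) - D) / 3 by [].
  clearbody eps.
  lra.
exists m => // y My.
have key : forall y, M y -> RE (ip (x - m) y) = 0.
  move=> y0 My0; apply: orth_re => t.
  have M' : M (cC t *: y0 + m) by apply: hM.2.
  apply: le_trans hmD _; apply: le_trans (DS _ M') _.
  by rewrite opprD addrA addrAC.
have h1 := key y My.
have h2 := key (iC *: y) (subspZ _ hM iC _ My).
move: h2; rewrite ipZr (RE_M (iC^* )) /= => h2.
apply: eqC => //=; lra.
Qed.

Lemma proj_thm (M : set H) : subsp M -> closed M ->
  exists P, orth_proj ip P /\ range P = M.
Proof.
move=> hM cM.
have : forall x, exists m, M m /\ forall y, M y -> ip (x - m) y = 0.
  by move=> x; have [m Mm hm] := decomp M hM cM x; exists m.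
move=> /boolp.choice [P hP].
have PM x : M (P x) := (hP x).1.
have hperp x y : M y -> ip (x - P x) y = 0 := (hP x).2 y.
have uniq x m : M m -> (forall y, M y -> ip (x - m) y = 0) -> P x = m.
  move=> Mm hm; apply/eqP; rewrite -subr_eq0; apply/eqP/ipxx_eq0.
  have Md : M (P x - m) by apply: subspB.
  have e : (x - m) - (x - P x) = P x - m by rewrite opprB addrC addrA subrK.
  by rewrite -{1}e ipBl hm // hperp // subrr.
have Plin : lin P.
  move=> a x y; apply: uniq; first by apply: hM.2.
  move=> w Mw.
  have e : (a *: x + y) - (a *: P x + P y) = a *: (x - P x) + (y - P y).
    by rewrite scalerBr opprD addrACA.
  by rewrite e ipDl ipZl !hperp // mulr0 addr0.
have Psym : sym P.
  move=> x y.
  have h1 : ip (P x) (y - P y) = 0 by rewrite ipC hperp ?PM // cj0.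
  have h2 : ip (x - P x) (P y) = 0 by rewrite hperp ?PM.
  move: h1 h2; rewrite ipBr ipBl => /eqP; rewrite subr_eq0 => /eqP ->.
  by move=> /eqP; rewrite subr_eq0 => /eqP ->.
have Pidem : P \o P = P.
  by apply/funext => x /=; apply: uniq => // y _; rewrite subrr ip0l.
have Pnorm v : nv (P v) <= nv v.
  set w := v - P v.
  have hv : v = w + P v by rewrite subrK.
  have h1 : ip w (P v) = 0 by rewrite hperp ?PM.
  have h2 : ip (P v) w = 0 by rewrite ipC h1 cj0.
  clearbody w.
  have e : ip v v = ip w w + ip (P v) (P v).
    rewrite [in LHS]hv !ipDl !ipDr.
    by rewrite h1 h2 addr0 add0r.
  have : nv v ^+ 2 = nv w ^+ 2 + nv (P v) ^+ 2 by rewrite !nv_re e RE_D.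
  have := nv_ge0 v; have := nv_ge0 w; have := nv_ge0 (P v).
  nra.
have Pcont : continuous P.
  move=> x; apply/cvgrPdist_lt => eps eps0.
  have h : (\forall t \near x, `|x - t| < eps)%classic.
    by apply: (cvgr_dist_lt id x _ eps eps0); exact: cvg_id.
  apply: filterS h => t /= ht.
  apply: le_lt_trans ht.
  by rewrite -(opB _ Plin) !nvE lecR.
exists P; split; first by split => //; split.
apply/funext => y; apply/propext; split; first by case=> z _ <-.
by move=> My; exists y => //; apply: uniq => // w _; rewrite subrr ip0l.
Qed.


Lemma zswap (a b c d : H) : c - d = a - b -> b - d = a - c.
Proof.
move=> h; have -> : a = c - d + b by rewrite h subrK.
by rewrite [RHS]addrC -!addrA addKr addrC.
Qed.

Section OP.
Variable P : H -> H.
Hypothesis hP : orth_proj ip P.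
Lemma op_sa : selfadj ip P. Proof. by case: hP. Qed.
Lemma op_lin : lin P. Proof. exact: sa_lin op_sa. Qed.
Lemma op_sym : sym P. Proof. exact: sa_sym op_sa. Qed.
Lemma op_idem x : P (P x) = P x.
Proof. by case: hP => _ e; exact: (fapp _ _ x e). Qed.
Lemma range_fix y : range P y <-> P y = y.
Proof. by split; [case=> z _ <-; exact: op_idem | move=> e; exists y]. Qed.
Lemma op_compl : orth_proj ip (fun x => x - P x).
Proof.
split; first exact: sa_sub sa_id op_sa.
by apply/funext => x /=; rewrite (opB _ op_lin) op_idem subrr subr0.
Qed.
Lemma range_closed : closed (range P).
Proof.
have -> : range P = [set x | (fun x => x - P x) x = 0]%classic.
  apply/funext => y; apply/propext; rewrite range_fix /=; split.
    by move=> ->; rewrite subrr.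
  by move=> /eqP; rewrite subr_eq0 => /eqP <-.
apply: closed_ker; apply: cont_sub; first by move=> x; exact: cvg_id.
exact: sa_cont op_sa.
Qed.
Lemma range_subsp : subsp (range P).
Proof.
split; first by apply/range_fix; exact: (op0 _ op_lin).
move=> a x y /range_fix hx /range_fix hy; apply/range_fix.
by rewrite op_lin hx hy.
Qed.
End OP.

Lemma le_fix (P Q : H -> H) : orth_proj ip P -> orth_proj ip Q ->
  proj_le P Q <-> Q \o P = P.
Proof.
move=> hP hQ; have sP := op_sym _ hP; have sQ := op_sym _ hQ.
by split; apply: swap.
Qed.
Lemma le_range (P Q : H -> H) : orth_proj ip P -> orth_proj ip Q ->
  proj_le P Q -> forall y, range P y -> range Q y.
Proof.
move=> hP hQ /(le_fix _ _ hP hQ) e y [z _ <-]; apply/(range_fix _ hQ).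
exact: (fapp _ _ z e).
Qed.
Lemma range_le (P Q : H -> H) : orth_proj ip P -> orth_proj ip Q ->
  (forall y, range P y -> range Q y) -> proj_le P Q.
Proof.
move=> hP hQ h; apply/(le_fix _ _ hP hQ)/funext => x /=.
by apply/(range_fix _ hQ)/h; exists x.
Qed.
Lemma le_antisym (P Q : H -> H) : orth_proj ip P -> orth_proj ip Q ->
  proj_le P Q -> proj_le Q P -> P = Q.
Proof.
move=> hP hQ h1 h2.
have e := (le_fix _ _ hP hQ).1 h1.
by rewrite -{1}e.
Qed.


Lemma cont_aff (a : R[i]) (c : H) : continuous (fun z : H => a *: z + c).
Proof.
move=> x; apply: continuousD; last exact: cst_continuous.
exact: scaler_continuous.
Qed.

Lemma pre_closed (a : R[i]) (c : H) (B : set H) : closed B ->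
  closed [set z | B (a *: z + c)]%classic.
Proof. move=> cB; exact: ((continuous_closedP _).1 (cont_aff a c) B cB). Qed.

Lemma closure_subsp (M : set H) : subsp M -> subsp (closure M).
Proof.
move=> hM; split; first exact: subset_closure hM.1.
have step1 : forall a m z, M m -> closure M z -> closure M (a *: z + m).
  move=> a m z Mm cz.
  apply: (closure_min M [set w | closure M (a *: w + m)]%classic
    (pre_closed a m _ (@closed_closure _ M)) _ z cz).
  by move=> w Mw /=; apply: subset_closure; apply: hM.2.
move=> a z w cz cw.
have e : [set v | closure M (a *: z + v)]%classic =
         [set v | closure M (1 *: v + a *: z)]%classic.
  by apply/funext => v /=; rewrite scale1r addrC.
have : [set v | closure M (a *: z + v)]%classic w.
  apply: (closure_min M _ _ _ w cw).
  - rewrite e; exact: pre_closed (@closed_closure _ M).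
  - by move=> v Mv /=; apply: step1.
by [].
Qed.


Lemma range_subsp_lin (A : H -> H) : lin A -> subsp (range A).
Proof.
move=> hA; split; first by exists 0 => //; exact: op0.
move=> a x y [x' _ <-] [y' _ <-]; exists (a *: x' + y') => //.
Qed.

Lemma rp_spec (A : H -> H) : lin A ->
  orth_proj ip (range_proj ip A) /\ range (range_proj ip A) = closure (range A).
Proof.
move=> hA; rewrite /range_proj.
apply: (epsilon_spec (inhabits (fun x : H => x))
  (fun P => orth_proj ip P /\ range P = closure (range A))).
apply: proj_thm.
  exact/closure_subsp/range_subsp_lin.
exact: closed_closure.
Qed.

Lemma subspI (A B : set H) : subsp A -> subsp B -> subsp (A `&` B)%classic.
Proof.
move=> hA hB; split; first by split; [exact: hA.1 | exact: hB.1].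
move=> a x y [Ax Bx] [Ay By]; split; [exact: hA.2 | exact: hB.2].
Qed.

Lemma meet_spec (P Q : H -> H) : orth_proj ip P -> orth_proj ip Q ->
  orth_proj ip (proj_meet ip P Q) /\
  range (proj_meet ip P Q) = (range P `&` range Q)%classic.
Proof.
move=> hP hQ.
have [M0 [hM0 rM0]] := proj_thm _ (subspI _ _ (range_subsp _ hP) (range_subsp _ hQ))
  (closedI (range_closed _ hP) (range_closed _ hQ)).
have sP : proj_le M0 P.
  by apply: range_le => // y; rewrite rM0 => -[].
have sQ : proj_le M0 Q.
  by apply: range_le => // y; rewrite rM0 => -[].
have gM0 : forall N, orth_proj ip N -> proj_le N P -> proj_le N Q -> proj_le N M0.
  move=> N hN lP lQ; apply: range_le => // y ry; rewrite rM0; split.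
    exact: (le_range _ _ hN hP lP).
  exact: (le_range _ _ hN hQ lQ).
have [hM lP lQ gM] : [/\ orth_proj ip (proj_meet ip P Q),
    proj_le (proj_meet ip P Q) P, proj_le (proj_meet ip P Q) Q &
    forall N, orth_proj ip N -> proj_le N P -> proj_le N Q ->
      proj_le N (proj_meet ip P Q)].
  rewrite /proj_meet.
  apply: (epsilon_spec (inhabits (fun x : H => x)) (fun M => [/\ orth_proj ip M,
    proj_le M P, proj_le M Q &
    forall N, orth_proj ip N -> proj_le N P -> proj_le N Q -> proj_le N M])).
  by exists M0; split.
have -> : proj_meet ip P Q = M0.
  by apply: le_antisym => //; [apply: gM0 | apply: gM].
by split.
Qed.


Lemma join_spec (P Q : H -> H) : orth_proj ip P -> orth_proj ip Q ->
  [/\ orth_proj ip (proj_join ip P Q), proj_le P (proj_join ip P Q),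
   proj_le Q (proj_join ip P Q) & proj_join ip P Q =
  (fun x => x - proj_meet ip (fun x => x - P x) (fun x => x - Q x) x)].
Proof.
move=> hP hQ.
have hP' := op_compl _ hP; have hQ' := op_compl _ hQ.
have [hM rM] := meet_spec _ _ hP' hQ'.
set M' := proj_meet ip _ _ in hM rM *.
set J0 := fun x => x - M' x.
have hJ0 : orth_proj ip J0 := op_compl _ hM.
have kP : forall z, P (M' z) = 0.
  move=> z; have : range M' (M' z) by exists z.
  rewrite rM => -[/(range_fix _ hP') e _].
  by move: e => /eqP; rewrite subr_eq addrC -subr_eq subrr => /eqP <-.
have kQ : forall z, Q (M' z) = 0.
  move=> z; have : range M' (M' z) by exists z.
  rewrite rM => -[_ /(range_fix _ hQ') e].
  by move: e => /eqP; rewrite subr_eq addrC -subr_eq subrr => /eqP <-.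
have lP : proj_le P J0.
  by apply/funext => x /=; rewrite /J0 (opB _ (op_lin _ hP)) kP subr0.
have lQ : proj_le Q J0.
  by apply/funext => x /=; rewrite /J0 (opB _ (op_lin _ hQ)) kQ subr0.
have least : forall N, orth_proj ip N -> proj_le P N -> proj_le Q N -> proj_le J0 N.
  move=> N hN lPN lQN; apply/funext => x /=; rewrite /J0.
  have eP : P (N x) = P x := fapp _ _ x lPN.
  have eQ : Q (N x) = Q x := fapp _ _ x lQN.
  have : range M' (x - N x).
    rewrite rM; split; apply/range_fix => //=.
      by rewrite (opB _ (op_lin _ hP)) eP subrr subr0.
    by rewrite (opB _ (op_lin _ hQ)) eQ subrr subr0.
  move=> /(range_fix _ hM); rewrite (opB _ (op_lin _ hM)).
  exact: zswap.
have [hJ lPJ lQJ gJ] : [/\ orth_proj ip (proj_join ip P Q),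
    proj_le P (proj_join ip P Q), proj_le Q (proj_join ip P Q) &
    forall N, orth_proj ip N -> proj_le P N -> proj_le Q N ->
      proj_le (proj_join ip P Q) N].
  rewrite /proj_join.
  apply: (epsilon_spec (inhabits (fun x : H => x)) (fun J => [/\ orth_proj ip J,
    proj_le P J, proj_le Q J &
    forall N, orth_proj ip N -> proj_le P N -> proj_le Q N -> proj_le J N])).
  by exists J0; split.
split => //; by apply: le_antisym => //; [apply: gJ | apply: least].
Qed.


Lemma lle_facts (Y Z : H -> H) : selfadj ip Y -> selfadj ip Z -> logical_le ip Y Z ->
  Z \o range_proj ip Y = Y /\ range_proj ip Y \o Z = Y.
Proof.
move=> hY hZ [E [hE YE ZE]].
have [hS rS] := rp_spec _ (sa_lin _ hY).
set S := range_proj ip Y in hS rS *.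
have EY : E \o Y = @zero_op R H := swap0 _ _ (sa_sym _ hY) (sa_sym _ hE) YE.
have fixY : forall y, S (Y y) = Y y.
  move=> y; apply/(range_fix _ hS); rewrite rS; apply: subset_closure; by exists y.
have YS : forall x, Y (S x) = Y x.
  move=> x.
  have k : Y (x - S x) = 0.
    apply: ip_extl => y; rewrite ip0l (sa_sym _ hY) -fixY -(op_sym _ hS).
    by rewrite (opB _ (op_lin _ hS)) (op_idem _ hS) subrr ip0l.
  by move: k; rewrite (opB _ (sa_lin _ hY)) => /eqP; rewrite subr_eq0 => /eqP <-.
have ES : forall x, E (S x) = 0.
  move=> x.
  have : (closure (range Y) `<=` [set z | E z = 0])%classic.
    apply: closure_min; first exact: closed_ker (sa_cont _ hE).
    by move=> z [w _ <-] /=; exact: (fapp _ _ w EY).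
  apply; rewrite -rS; by exists x.
have SE : forall x, S (E x) = 0.
  have : S \o E = @zero_op R H.
    apply: swap0; [exact: sa_sym hE | exact: op_sym hS |].
    by apply/funext => x /=; rewrite ES.
  by move=> e x; exact: (fapp _ _ x e).
split; apply/funext => x /=; rewrite ZE /add_op.
  by rewrite YS ES addr0.
by rewrite (opD _ (op_lin _ hS)) fixY SE addr0.
Qed.

Lemma le_rp (P Y : H -> H) : orth_proj ip P -> lin Y -> (forall x, P (Y x) = Y x) ->
  forall x, P (range_proj ip Y x) = range_proj ip Y x.
Proof.
move=> hP hY h x; have [hS rS] := rp_spec _ hY.
apply/(range_fix _ hP).
have : (closure (range Y) `<=` range P)%classic.
  apply: closure_min; first exact: range_closed.
  by move=> z [w _ <-]; apply/(range_fix _ hP).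
apply; rewrite -rS; by exists x.
Qed.

Lemma comm_range (T P Q M : H -> H) : selfadj ip T -> orth_proj ip P ->
  orth_proj ip Q -> orth_proj ip M -> range M = (range P `&` range Q)%classic ->
  T \o P = P \o T -> T \o Q = Q \o T -> T \o M = M \o T.
Proof.
move=> hT hP hQ hM rM eP eQ.
have k : forall z, M (T (M z)) = T (M z).
  move=> z; apply/(range_fix _ hM); rewrite rM.
  have : range M (M z) by exists z.
  rewrite rM => -[/(range_fix _ hP) h1 /(range_fix _ hQ) h2].
  split; apply/range_fix => //.
    by have := fapp _ _ (M z) eP => /= <-; rewrite h1.
  by have := fapp _ _ (M z) eQ => /= <-; rewrite h2.
apply/funext => x /=; apply: ip_extl => y.
have sM := op_sym _ hM; have sT := sa_sym _ hT.
have e1 : ip (T (M x)) y = ip x (T (M y)) by rewrite -k sM sT sM k.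
have e2 : ip (M (T x)) y = ip x (T (M y)) by rewrite sM sT.
by rewrite e1 e2.
Qed.


Lemma comm_meet (T P Q : H -> H) : selfadj ip T -> orth_proj ip P -> orth_proj ip Q ->
  T \o P = P \o T -> T \o Q = Q \o T ->
  T \o proj_meet ip P Q = proj_meet ip P Q \o T.
Proof.
move=> hT hP hQ eP eQ; have [hM rM] := meet_spec _ _ hP hQ.
exact: comm_range hT hP hQ hM rM eP eQ.
Qed.

Lemma comm_compl (T P : H -> H) : lin T -> T \o P = P \o T ->
  T \o (fun x => x - P x) = (fun x => x - P x) \o T.
Proof.
move=> hT e; apply/funext => x /=; rewrite (opB _ hT).
by have := fapp _ _ x e => /= ->.
Qed.

Lemma comm_join (T P Q : H -> H) : selfadj ip T -> orth_proj ip P -> orth_proj ip Q ->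
  T \o P = P \o T -> T \o Q = Q \o T ->
  T \o proj_join ip P Q = proj_join ip P Q \o T.
Proof.
move=> hT hP hQ eP eQ; have [_ _ _ ->] := join_spec _ _ hP hQ.
apply: comm_compl; first exact: sa_lin hT.
apply: comm_meet => //; try exact: op_compl.
  exact: comm_compl (sa_lin _ hT) eP.
exact: comm_compl (sa_lin _ hT) eQ.
Qed.


Lemma main_meet (A B C : H -> H) :
  selfadj ip A -> selfadj ip B -> selfadj ip C ->
  logical_le ip A C -> logical_le ip B C ->
  is_meet_S ip A B
    (C \o proj_meet ip (range_proj ip A) (range_proj ip B)).
Proof.
move=> hA hB hC lAC lBC.
have [hP rP] := rp_spec _ (sa_lin _ hA).
have [hQ rQ] := rp_spec _ (sa_lin _ hB).
set P := range_proj ip A in hP rP *.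
set Q := range_proj ip B in hQ rQ *.
have [CP PC] := lle_facts _ _ hA hC lAC.
have [CQ QC] := lle_facts _ _ hB hC lBC.
have cpx : forall x, C (P x) = A x := fun x => fapp _ _ x CP.
have pcx : forall x, P (C x) = A x := fun x => fapp _ _ x PC.
have cqx : forall x, C (Q x) = B x := fun x => fapp _ _ x CQ.
have qcx : forall x, Q (C x) = B x := fun x => fapp _ _ x QC.
have cP : C \o P = P \o C by rewrite CP PC.
have cQ : C \o Q = Q \o C by rewrite CQ QC.
have PA : forall x, P (A x) = A x by move=> x; rewrite -pcx (op_idem _ hP).
have QB : forall x, Q (B x) = B x by move=> x; rewrite -qcx (op_idem _ hQ).
have [hM rM] := meet_spec _ _ hP hQ.
set M := proj_meet ip P Q in hM rM *.
have cM : C \o M = M \o C := comm_meet _ _ _ hC hP hQ cP cQ.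
have cmx : forall x, C (M x) = M (C x) := fun x => fapp _ _ x cM.
have MP : proj_le M P by apply: range_le => // y; rewrite rM => -[].
have MQ : proj_le M Q by apply: range_le => // y; rewrite rM => -[].
have mpx : forall x, M (P x) = M x := fun x => fapp _ _ x MP.
have mqx : forall x, M (Q x) = M x := fun x => fapp _ _ x MQ.
have hX : selfadj ip (C \o M) := sa_comp _ _ hC (op_sa _ hM) cM.
split => //.
- exists (fun x => A x - C (M x)); split.
  + exact: sa_sub hA hX.
  + apply/funext => x /=; rewrite /zero_op (opB _ (op_lin _ hM)) (opB _ (sa_lin _ hC)).
    by rewrite -pcx mpx -!cmx (op_idem _ hM) subrr.
  + by apply/funext => x; rewrite /add_op /= addrCA subrr addr0.
- exists (fun x => B x - C (M x)); split.
  + exact: sa_sub hB hX.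
  + apply/funext => x /=; rewrite /zero_op (opB _ (op_lin _ hM)) (opB _ (sa_lin _ hC)).
    by rewrite -qcx mqx -!cmx (op_idem _ hM) subrr.
  + by apply/funext => x; rewrite /add_op /= addrCA subrr addr0.
move=> Y hY lYA lYB.
have [hS rS] := rp_spec _ (sa_lin _ hY).
set S := range_proj ip Y in hS rS *.
have [AS SA] := lle_facts _ _ hY hA lYA.
have [BS SB] := lle_facts _ _ hY hB lYB.
have asx : forall x, A (S x) = Y x := fun x => fapp _ _ x AS.
have sax : forall x, S (A x) = Y x := fun x => fapp _ _ x SA.
have bsx : forall x, B (S x) = Y x := fun x => fapp _ _ x BS.
have PY : forall x, P (Y x) = Y x by move=> x; rewrite -asx PA.
have QY : forall x, Q (Y x) = Y x by move=> x; rewrite -bsx QB.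
have PS := le_rp _ _ hP (sa_lin _ hY) PY.
have QS := le_rp _ _ hQ (sa_lin _ hY) QY.
rewrite -/S in PS QS.
have SP : proj_le S P.
  by apply/(le_fix _ _ hS hP)/funext => x /=; rewrite PS.
have spx : forall x, S (P x) = S x := fun x => fapp _ _ x SP.
have SM : proj_le S M.
  apply: range_le => // y [z _ <-]; rewrite rM; split; apply/range_fix => //.
have smx : forall x, S (M x) = S x := fun x => fapp _ _ x SM.
have CS : forall x, C (S x) = Y x by move=> x; rewrite -PS cpx asx.
have SC : forall x, S (C x) = Y x by move=> x; rewrite -spx pcx sax.
exists (fun x => C (M x) - Y x); split.
- exact: sa_sub hX hY.
- apply/funext => x /=; rewrite /zero_op (opB _ (sa_lin _ hY)).
  have e1 : Y (C (M x)) = C (C (S x)) by rewrite -CS SC -CS smx.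
  have e2 : Y (Y x) = C (C (S x)).
    by rewrite -{1}CS -CS SC -CS (op_idem _ hS).
  by rewrite e1 e2 subrr.
- by apply/funext => x; rewrite /add_op /= addrCA subrr addr0.
Qed.


Lemma main_join (A B C : H -> H) :
  selfadj ip A -> selfadj ip B -> selfadj ip C ->
  logical_le ip A C -> logical_le ip B C ->
  is_join_S ip A B
    (C \o proj_join ip (range_proj ip A) (range_proj ip B)).
Proof.
move=> hA hB hC lAC lBC.
have [hP rP] := rp_spec _ (sa_lin _ hA).
have [hQ rQ] := rp_spec _ (sa_lin _ hB).
set P := range_proj ip A in hP rP *.
set Q := range_proj ip B in hQ rQ *.
have [CP PC] := lle_facts _ _ hA hC lAC.
have [CQ QC] := lle_facts _ _ hB hC lBC.
have cpx : forall x, C (P x) = A x := fun x => fapp _ _ x CP.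
have pcx : forall x, P (C x) = A x := fun x => fapp _ _ x PC.
have cqx : forall x, C (Q x) = B x := fun x => fapp _ _ x CQ.
have qcx : forall x, Q (C x) = B x := fun x => fapp _ _ x QC.
have cP : C \o P = P \o C by rewrite CP PC.
have cQ : C \o Q = Q \o C by rewrite CQ QC.
have PA : forall x, P (A x) = A x by move=> x; rewrite -pcx (op_idem _ hP).
have QB : forall x, Q (B x) = B x by move=> x; rewrite -qcx (op_idem _ hQ).
have [hJ PJ QJ eJ] := join_spec _ _ hP hQ.
set J := proj_join ip P Q in hJ PJ QJ eJ *.
have pjx : forall x, P (J x) = P x := fun x => fapp _ _ x PJ.
have qjx : forall x, Q (J x) = Q x := fun x => fapp _ _ x QJ.
have cJ : C \o J = J \o C := comm_join _ _ _ hC hP hQ cP cQ.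
have cjx : forall x, C (J x) = J (C x) := fun x => fapp _ _ x cJ.
have hX : selfadj ip (C \o J) := sa_comp _ _ hC (op_sa _ hJ) cJ.
split => //.
- exists (fun x => C (J x) - A x); split.
  + exact: sa_sub hX hA.
  + apply/funext => x /=; rewrite /zero_op (opB _ (sa_lin _ hA)).
    have e1 : A (C (J x)) = C (C (P x)).
      by rewrite -cpx -[P (C (J x))]/((P \o C) (J x)) -cP /= pjx.
    have e2 : A (A x) = C (C (P x)) by rewrite -{1}cpx PA -cpx.
    by rewrite e1 e2 subrr.
  + by apply/funext => x; rewrite /add_op /= addrCA subrr addr0.
- exists (fun x => C (J x) - B x); split.
  + exact: sa_sub hX hB.
  + apply/funext => x /=; rewrite /zero_op (opB _ (sa_lin _ hB)).
    have e1 : B (C (J x)) = C (C (Q x)).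
      by rewrite -cqx -[Q (C (J x))]/((Q \o C) (J x)) -cQ /= qjx.
    have e2 : B (B x) = C (C (Q x)) by rewrite -{1}cqx QB -cqx.
    by rewrite e1 e2 subrr.
  + by apply/funext => x; rewrite /add_op /= addrCA subrr addr0.
move=> Y hY lAY lBY.
have [YP PY] := lle_facts _ _ hA hY lAY.
have [YQ QY] := lle_facts _ _ hB hY lBY.
have ypx : forall x, Y (P x) = A x := fun x => fapp _ _ x YP.
have pyx : forall x, P (Y x) = A x := fun x => fapp _ _ x PY.
have yqx : forall x, Y (Q x) = B x := fun x => fapp _ _ x YQ.
have qyx : forall x, Q (Y x) = B x := fun x => fapp _ _ x QY.
have yP : Y \o P = P \o Y by rewrite YP PY.
have yQ : Y \o Q = Q \o Y by rewrite YQ QY.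
have cJY : Y \o J = J \o Y := comm_join _ _ _ hY hP hQ yP yQ.
have yjx : forall x, Y (J x) = J (Y x) := fun x => fapp _ _ x cJY.
(* C and Y agree on the range of J *)
set P' := fun x => x - P x.
set Q' := fun x => x - Q x.
have hP' : orth_proj ip P' := op_compl _ hP.
have hQ' : orth_proj ip Q' := op_compl _ hQ.
have [hM rM] := meet_spec _ _ hP' hQ'.
set M := proj_meet ip P' Q' in hM rM eJ *.
set W := fun x => C x - Y x.
have hW : selfadj ip W := sa_sub _ _ hC hY.
have MW : M \o W = W.
  apply/funext => z /=; apply/(range_fix _ hM); rewrite rM.
  split; apply/range_fix => //=; rewrite /W.
    by rewrite /P'  (opB _ (op_lin _ hP)) pcx pyx subrr subr0.
  by rewrite /Q'  (opB _ (op_lin _ hQ)) qcx qyx subrr subr0.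
have WM : W \o M = W := swap _ _ _ (op_sym _ hM) (sa_sym _ hW) (sa_sym _ hW) MW.
have CJ : forall x, C (J x) = Y (J x).
  move=> x; apply/eqP; rewrite -subr_eq0; apply/eqP.
  have : W (J x) = 0.
    rewrite eJ /= (opB _ (sa_lin _ hW)).
    by have := fapp _ _ x WM => /= ->; rewrite subrr.
  by [].
exists (fun x => Y x - C (J x)); split.
- exact: sa_sub hY hX.
- apply/funext => x /=; rewrite /zero_op (opB _ (op_lin _ hJ)) (opB _ (sa_lin _ hC)).
  have e1 : C (J (Y x)) = Y (Y (J x)) by rewrite CJ -yjx.
  have e2 : C (J (C (J x))) = Y (Y (J x)).
    by rewrite -cjx (op_idem _ hJ) CJ yjx CJ.
  by rewrite e1 e2 subrr.
- by apply/funext => x; rewrite /add_op /= addrCA subrr addr0.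
Qed.

End Hilb.

Theorem corollary3 (R : realType) (H : completeNormedModType R[i])
    (ip : H -> H -> R[i]) (hH : hilbert_inner ip) (A B C : H -> H) :
  selfadj ip A -> selfadj ip B -> selfadj ip C ->
  logical_le ip A C -> logical_le ip B C ->
  is_meet_S ip A B
    (C \o proj_meet ip (range_proj ip A) (range_proj ip B)) /\
  is_join_S ip A B
    (C \o proj_join ip (range_proj ip A) (range_proj ip B)).
Proof.
move=> hA hB hC lAC lBC; split.
  exact: (main_meet _ _ _ hH _ _ _ hA hB hC lAC lBC).
exact: (main_join _ _ _ hH _ _ _ hA hB hC lAC lBC).
Qed.
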